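(* Let $k,l,N$ be positive integers and let $\mu_0,\dots,\mu_N$ be proper distributions on $\mathbb{T}^2$. Then the system $$-\partial_1^k\varphi_1=\mu_0,\qquad \partial_2^l\varphi_j-\partial_1^k\varphi_{j+1}=\mu_j\ (j=1,\dots,N-1),\qquad \partial_2^l\varphi_N=\mu_N$$ admits a solution in proper distributions $\varphi_1,\dots,\varphi_N$ if and only if $$\sum_{j=0}^N\partial_1^{jk}\partial_2^{(N-j)l}\mu_j=0.$$ Moreover, if this condition holds, the solution in proper distributions is unique.
   Context: The torus is parametrised by $t\mapsto e^{2\pi it}$; $\partial_1,\partial_2$ are derivatives in the parameters; Fourier coefficients are $\hat f(m,n)$, $(m,n)\in\mathbb{Z}^2$. A distribution $f$ on $\mathbb{T}^2$ is proper if $\hat f(s,t)=0$ whenever $s=0$ or $t=0$. *)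

(* Defs.v *)
From HB Require Import structures.
From mathcomp Require Import all_boot all_order all_algebra.
From mathcomp Require Import reals trigo.
From mathcomp Require Import complex.
Set Implicit Arguments. Unset Strict Implicit. Unset Printing Implicit Defensive.
Import Order.TTheory GRing.Theory Num.Theory.
Local Open Scope ring_scope.
Local Open Scope complex_scope.

(* A distribution f on T^2 = R^2/Z^2 (torus parametrised by t |-> e^{2 pi i t})
   is identified with its family of Fourier coefficients  hat f : Z^2 -> C,
   which is exactly a sequence of at most polynomial growth. *)
Definition fcoef (R : realType) := int -> int -> R[i].

Definition is_distr (R : realType) (f : fcoef R) : Prop :=
  exists (c : R) (M : nat), forall m n : int,
    `|f m n| <= (c%:C * ((1 + `|m| + `|n|)%:~R) ^+ M)%R.

Definition proper (R : realType) (f : fcoef R) : Prop :=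
  forall m n : int, (m = 0 \/ n = 0) -> f m n = 0.

Definition d1 (R : realType) (k : nat) (f : fcoef R) : fcoef R :=
  fun m n => ((2 * pi)%:C * 'i * m%:~R) ^+ k * f m n.
Definition d2 (R : realType) (k : nat) (f : fcoef R) : fcoef R :=
  fun m n => ((2 * pi)%:C * 'i * n%:~R) ^+ k * f m n.

Definition proper_distr (R : realType) (f : fcoef R) : Prop :=
  is_distr f /\ proper f.

Definition solves (R : realType) (k l N : nat) (mu phi : nat -> fcoef R) : Prop :=
  [/\ (forall m n, - d1 k (phi 1%N) m n = mu 0%N m n),
      (forall j, (1 <= j)%N -> (j <= N - 1)%N ->
         forall m n, d2 l (phi j) m n - d1 k (phi j.+1) m n = mu j m n) &
      (forall m n, d2 l (phi N) m n = mu N m n)].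

Definition compat (R : realType) (k l N : nat) (mu : nat -> fcoef R) : Prop :=
  forall m n, \sum_(j < N.+1) d1 (j * k) (d2 ((N - j) * l) (mu j)) m n = 0.

(* Main.v *)
Require Import Defs.
From mathcomp Require Import all_boot all_order all_algebra.
From mathcomp Require Import reals trigo complex.
From mathcomp Require Import ring lra zify.
From Stdlib Require Import FunctionalExtensionality.
Set Implicit Arguments. Unset Strict Implicit. Unset Printing Implicit Defensive.
Import Order.TTheory GRing.Theory Num.Theory.
Local Open Scope ring_scope.
Local Open Scope complex_scope.

Definition PP (R : realType) (m n : int) : R[i] := ((1 + `|m| + `|n|)%:~R).

Lemma PP_ge1 (R : realType) m n : 1 <= PP R m n.
Proof. rewrite /PP ler1z -addrA lerDl; exact: addr_ge0. Qed.

Lemma normCr (R : realType) (r : R) : `|r%:C| = `|r|%:C.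
Proof. by rewrite normc_def /= expr0n /= addr0 sqrtr_sqr. Qed.

Lemma normCi (R : realType) : `|'i : R[i]| = 1.
Proof. by rewrite normc_def /= expr0n /= add0r expr1n sqrtr1. Qed.

Lemma bound_mono (R : realType) (c c' : R) M M' (x P : R[i]) :
  1 <= P -> 0 <= c -> c <= c' -> (M <= M')%N ->
  x <= c%:C * P ^+ M -> x <= c'%:C * P ^+ M'.
Proof.
move=> P1 c0 cc' MM' h; apply: (le_trans h).
have P0 : 0 <= P by apply: le_trans P1.
apply: ler_pM; rewrite ?lecR ?ler0c //; first exact: exprn_ge0.
exact: ler_weXn2l.
Qed.

Lemma distrP (R : realType) (f : fcoef R) : is_distr f ->
  exists c M, 0 <= c /\ forall m n, `|f m n| <= c%:C * PP R m n ^+ M.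
Proof.
move=> [c [M h]]; exists c, M; split => //.
have := h 0 0; rewrite /PP normr0 !addr0 expr1n mulr1 => /(le_trans (normr_ge0 _)).
by rewrite ler0c.
Qed.

Lemma distr_add (R : realType) (f g : fcoef R) : is_distr f -> is_distr g ->
  is_distr (fun m n => f m n + g m n).
Proof.
move=> /distrP [c1 [M1 [c10 h1]]] /distrP [c2 [M2 [c20 h2]]].
exists (c1 + c2), (maxn M1 M2) => m n.
apply: (le_trans (ler_normD _ _)).
have -> : (c1 + c2)%:C = c1%:C + c2%:C :> R[i] by apply/eqP; rewrite eq_complex /= addr0 !eqxx.
rewrite mulrDl; apply: lerD.
  exact: (bound_mono (PP_ge1 _ _ _) c10 (lexx _) (leq_maxl _ _) (h1 m n)).
exact: (bound_mono (PP_ge1 _ _ _) c20 (lexx _) (leq_maxr _ _) (h2 m n)).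
Qed.

Lemma distr_opp (R : realType) (f : fcoef R) : is_distr f ->
  is_distr (fun m n => - f m n).
Proof. by move=> [c [M h]]; exists c, M => m n; rewrite normrN. Qed.

Lemma distr_mul (R : realType) (g f : fcoef R) (C : R) L :
  0 <= C -> (forall m n, `|g m n| <= C%:C * PP R m n ^+ L) ->
  is_distr f -> is_distr (fun m n => g m n * f m n).
Proof.
move=> C0 hg /distrP [c [M [c0 h]]].
exists (C * c), (L + M) => m n.
rewrite normrM rmorphM exprD mulrACA.
apply: ler_pM => //; exact: normr_ge0.
Qed.

Lemma distr0 (R : realType) : is_distr (fun _ _ : int => 0 : R[i]).
Proof. by exists 0, 0%N => m n; rewrite normr0 mul0r. Qed.

Definition AA (R : realType) k (m : int) : R[i] := ((2 * pi)%:C * 'i * m%:~R) ^+ k.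

Lemma normAA (R : realType) k m : `|AA R k m| = ((2 * pi) * `|m|%:~R)%:C ^+ k.
Proof.
rewrite /AA normrX !normrM normCr normCi mulr1 -intr_norm rmorphM /=.
rewrite rmorph_int ger0_norm // mulr_ge0 //; exact: pi_ge0.
Qed.

Lemma AA_bound (R : realType) k m n : `|AA R k m| <= ((2 * pi) ^+ k)%:C * PP R m n ^+ k.
Proof.
have p0 : 0 <= (2 * pi : R) by rewrite mulr_ge0 ?pi_ge0.
have P0 : 0 <= PP R m n by exact: le_trans (PP_ge1 _ _ _).
rewrite normAA rmorphXn -exprMn; apply: lerXn2r; rewrite ?nnegrE.
- by rewrite ler0c mulr_ge0.
- by rewrite mulr_ge0 // ler0c.
rewrite rmorphM /=; apply: ler_wpM2l; first by rewrite ler0c.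
rewrite rmorph_int /PP ler_int -(addrC `|m|) -addrA lerDl; exact: addr_ge0.
Qed.

Lemma AA_inv_bound (R : realType) k m : `|(AA R k m)^-1| <= 1.
Proof.
have [->|m0] := eqVneq m 0.
  case: k => [|k]; first by rewrite /AA expr0 invr1 normr1.
  by rewrite /AA mulr0 expr0n invr0 normr0.
have hA : 1 <= `|AA R k m|.
  rewrite normAA; apply: exprn_ege1.
  have -> : (1 : R[i]) = 1%:C by [].
  rewrite lecR.
  have h1 : (1 : R) <= `|m|%:~R by rewrite ler1z -gtz0_ge1 normr_gt0.
  have h2 := pi_ge2 R.
  nra.
rewrite normfV invf_le1 //; exact: lt_le_trans hA.
Qed.

Lemma AA_ge1 (R : realType) k m : m != 0 -> 1 <= `|AA R k m|.
Proof.
move=> m0; rewrite normAA; apply: exprn_ege1.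
have -> : (1 : R[i]) = 1%:C by [].
rewrite lecR.
have h1 : (1 : R) <= `|m|%:~R by rewrite ler1z -gtz0_ge1 normr_gt0.
have h2 := pi_ge2 R.
nra.
Qed.

Lemma AA_neq0 (R : realType) k m : m != 0 -> AA R k m != 0.
Proof.
move=> /(AA_ge1 R k) h; rewrite -normr_eq0; apply/negP => /eqP e.
by move: h; rewrite e ler10.
Qed.

Lemma AA_0 (R : realType) k : (0 < k)%N -> AA R k 0 = 0.
Proof. by case: k => // k _; rewrite /AA mulr0 expr0n. Qed.

Lemma key (F : comNzRingType) (A B : F) (f mu : nat -> F) N :
  A * f 1%N = - mu 0%N ->
  (forall j, (1 <= j)%N -> (j < N)%N -> A * f j.+1 = B * f j - mu j) ->
  forall j, (1 <= j)%N -> (j <= N)%N ->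
    B * A ^+ j * f j = - \sum_(i < j) A ^+ i * B ^+ (j - i) * mu i.
Proof.
move=> h1 h2; elim=> // j IH _ hj.
case: j IH hj => [|j] IH hj.
  by rewrite big_ord1 expr1 -mulrA h1 expr0 subn0 expr1 mul1r mulrN.
have IH' := IH isT (ltnW hj).
rewrite big_ord_recr /= subSnn expr1 exprSr.
have -> : B * (A ^+ j.+1 * A) * f j.+2 = B * A ^+ j.+1 * (A * f j.+2) by ring.
rewrite h2 //.
have -> : \sum_(i < j.+1) A ^+ i * B ^+ (j.+2 - i) * mu i =
          B * \sum_(i < j.+1) A ^+ i * B ^+ (j.+1 - i) * mu i.
  rewrite mulr_sumr; apply: eq_bigr => i _.
  by rewrite subSn ?(ltnW (ltn_ord i)) // exprS; ring.
rewrite (_ : \sum_(i < j.+1) A ^+ i * B ^+ (j.+1 - i) * mu i = - (B * A ^+ j.+1 * f j.+1)); first ring.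
by rewrite IH' opprK.
Qed.

Lemma d1E (R : realType) j k (g : fcoef R) m n :
  d1 (j * k) g m n = AA R k m ^+ j * g m n.
Proof. by rewrite /d1 /AA mulnC exprM. Qed.

Lemma d2E (R : realType) j k (g : fcoef R) m n :
  d2 (j * k) g m n = AA R k n ^+ j * g m n.
Proof. by rewrite /d2 /AA mulnC exprM. Qed.

Lemma compatE (R : realType) k l N (mu : nat -> fcoef R) m n :
  \sum_(j < N.+1) d1 (j * k) (d2 ((N - j) * l) (mu j)) m n =
  \sum_(j < N) AA R k m ^+ j * AA R l n ^+ (N - j) * mu j m n
  + AA R k m ^+ N * mu N m n.
Proof.
rewrite big_ord_recr /= d1E d2E subnn expr0 mul1r; congr (_ + _).
by apply: eq_bigr => i _; rewrite d1E d2E mulrA.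
Qed.

Fixpoint ph (R : realType) k l (mu : nat -> fcoef R) (j : nat) : fcoef R :=
  match j with
  | 0 => fun _ _ => 0
  | j'.+1 => fun m n => (AA R l n * ph k l mu j' m n - mu j' m n) / AA R k m
  end.

Lemma distr_ext (R : realType) (f g : fcoef R) :
  (forall m n, f m n = g m n) -> is_distr g -> is_distr f.
Proof. by move=> e [c [M h]]; exists c, M => m n; rewrite e. Qed.

Lemma mulKA (R : realType) k m (x : R[i]) : m != 0 -> AA R k m * (x / AA R k m) = x.
Proof. by move=> m0; rewrite mulrC divfK // AA_neq0. Qed.

Theorem lemma5 (R : realType) (k l N : nat) (mu : nat -> fcoef R) :
  (0 < k)%N -> (0 < l)%N -> (0 < N)%N ->
  (forall j, (j <= N)%N -> proper_distr (mu j)) ->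
  ((exists phi : nat -> fcoef R,
      (forall j, (1 <= j)%N -> (j <= N)%N -> proper_distr (phi j)) /\
      solves k l N mu phi)
    <-> compat k l N mu) /\
  (compat k l N mu ->
   forall phi psi : nat -> fcoef R,
     (forall j, (1 <= j)%N -> (j <= N)%N -> proper_distr (phi j)) ->
     (forall j, (1 <= j)%N -> (j <= N)%N -> proper_distr (psi j)) ->
     solves k l N mu phi -> solves k l N mu psi ->
     forall j, (1 <= j)%N -> (j <= N)%N -> phi j = psi j).
Proof.
move=> k0 l0 N0 hmu.
have mu0 : forall j m n, (j <= N)%N -> (m = 0 \/ n = 0) -> mu j m n = 0.
  by move=> j m n /hmu [_ p] /p.
split; first split.
- move=> [phi [hphi [e1 e2 e3]]] m n.
  rewrite compatE.
  have := @key _ (AA R k m) (AA R l n) (fun j => phi j m n) (fun j => mu j m n) N.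
  move=> /(_ _ _ N N0 (leqnn N)) h.
  rewrite (_ : \sum_(j < N) _ = - (AA R l n * AA R k m ^+ N * phi N m n)).
    rewrite -e3 /d2 -/(AA R l n); ring.
  rewrite h ?opprK //.
  + by rewrite -e1 /d1 -/(AA R k m) opprK.
  + move=> j j1 jN; have jN' : (j <= N - 1)%N by lia.
    by rewrite -(e2 j j1 jN') /d1 /d2 -/(AA R k m) -/(AA R l n); ring.
- move=> hc; exists (ph k l mu).
  have phm0 : forall j n, ph k l mu j.+1 0 n = 0.
    by move=> j n; rewrite /= AA_0 // invr0 mulr0.
  have phn0 : forall j m, (j <= N)%N -> ph k l mu j m 0 = 0.
    elim=> [//|j IH] m jN /=.
    by rewrite AA_0 // mul0r (mu0 j m 0 (ltnW jN) (or_intror erefl)) subrr mul0r.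
  have PPC : forall x y, PP R y x = PP R x y.
    by move=> x y; rewrite /PP addrAC.
  have distr : forall j, (j <= N)%N -> is_distr (ph k l mu j).
    elim=> [_|j IH jN]; first exact: distr0.
    apply: (@distr_ext _ _
      (fun m n => (AA R k m)^-1 * (AA R l n * ph k l mu j m n + - mu j m n))).
      by move=> m n; rewrite /= mulrC.
    apply: (@distr_mul _ _ _ 1 0) => //.
      by move=> m n; rewrite expr0 mulr1; exact: AA_inv_bound.
    apply: distr_add; last by apply: distr_opp; exact: (hmu j (ltnW jN)).1.
    apply: (@distr_mul _ _ _ ((2 * pi) ^+ l) l).
    + by rewrite exprn_ge0 // mulr_ge0 // pi_ge0.
    + by move=> m n; rewrite -PPC; exact: AA_bound.
    exact: IH (ltnW jN).
  split.
  + move=> j j1 jN; split; first exact: distr.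
    move=> m n [->|->]; last exact: phn0.
    by case: j j1 {jN} => // j _; exact: phm0.
  split.
  + move=> m n; rewrite /d1 -/(AA R k m) /=.
    have [->|m0] := eqVneq m 0.
      by rewrite AA_0 // mul0r oppr0 mu0 //; left.
    by rewrite mulKA // mulr0 sub0r opprK.
  + move=> j j1 jN m n; rewrite /d1 /d2 -/(AA R k m) -/(AA R l n) /=.
    have jN' : (j < N)%N by lia.
    have [->|m0] := eqVneq m 0.
      rewrite AA_0 // mul0r subr0 mu0 ?(ltnW jN') //; last by left.
      by case: j j1 {jN jN'} => // j _; rewrite phm0 mulr0.
    rewrite mulKA //; ring.
  + move=> m n; rewrite /d2 -/(AA R l n).
    have [N' eN] : exists N', N = N'.+1 by exists N.-1; rewrite prednK.
    have [->|m0] := eqVneq m 0.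
      by rewrite eN phm0 mulr0 -eN mu0 //; left.
    have h := @key _ (AA R k m) (AA R l n) (fun j => ph k l mu j m n)
      (fun j => mu j m n) N.
    have {h} h := h _ _ N N0 (leqnn N).
    have hc' := hc m n; rewrite compatE in hc'.
    apply: (@mulfI _ (AA R k m ^+ N)); first by rewrite expf_neq0 // AA_neq0.
    rewrite (_ : AA R k m ^+ N * mu N m n = - \sum_(i < N) AA R k m ^+ i * AA R l n ^+ (N - i) * mu i m n).
      rewrite -h.
      * ring.
      * by rewrite /= mulKA // mulr0 sub0r.
      * by move=> j j1 jN /=; rewrite mulKA.
    by apply/eqP; rewrite -subr_eq0 opprK addrC hc'.
- move=> _ phi psi hphi hpsi [e1 e2 e3] [f1 f2 f3].
  suff H : forall j, (1 <= j)%N -> (j <= N)%N -> forall m n, phi j m n = psi j m n.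
    move=> j j1 jN; apply: functional_extensionality => m.
    apply: functional_extensionality => n; exact: H.
  elim=> // j IH _ jN m n.
  have [->|m0] := eqVneq m 0.
    by rewrite ((hphi j.+1 isT jN).2 0 n (or_introl erefl)) ((hpsi j.+1 isT jN).2 0 n (or_introl erefl)).
  apply: (@mulfI _ (AA R k m)); first exact: AA_neq0.
  case: j IH jN => [|j] IH jN.
    have E := e1 m n; rewrite -(f1 m n) in E; exact: oppr_inj E.
  have Ef : phi j.+1 = psi j.+1.
    apply: functional_extensionality => m'.
    apply: functional_extensionality => n'; exact: IH isT (ltnW jN) m' n'.
  have jN' : (j.+1 <= N - 1)%N by lia.
  have E := e2 j.+1 isT jN' m n; rewrite -(f2 j.+1 isT jN' m n) Ef in E.
  by move/addrI: E => /oppr_inj.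
Qed.
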